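(* Let $A\in\mathbb{S}^n$ be a non-zero diagonal matrix and let $\mathcal{L}\subset\mathbb{S}^n$ be the linear subspace defined by $\kappa_{ij}=0$ for all $i\neq j$ together with $\mathrm{tr}(AK)=0$ (where $K=(\kappa_{ij})$), and assume $\mathcal{L}$ is regular. Then the ML degree of $\mathcal{L}$ is $\mathrm{rk}(A)-1$.
   Context: $\mathbb{S}^n$ denotes the space of complex symmetric $n\times n$ matrices. A linear subspace $\mathcal{L}$ is regular if it contains a full-rank matrix. $\mathcal{L}^\perp=\{\Sigma:\mathrm{tr}(K\Sigma)=0\ \forall K\in\mathcal{L}\}$. The reciprocal variety $\mathcal{L}^{-1}$ is the Zariski closure of the set of inverses of invertible matrices in $\mathcal{L}$. The ML degree of $\mathcal{L}$ is the number of matrices in $\mathcal{L}^{-1}\cap(\mathcal{L}^\perp+S)$ for generic $S\in\mathbb{S}^n$. *)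

(* Defs.v *)
(* Complex numbers are modelled as R[i] (mathcomp-real-closed
   `complex`) for an arbitrary R : realType (a complete archimedean ordered
   field, i.e. the real numbers).  Polynomial functions on matrix space are
   multivariate polynomials ({mpoly _[n*n]}) in the n*n entries. *)
From HB Require Import structures.
From mathcomp Require Import all_boot all_order all_algebra.
From mathcomp Require Import reals complex mpoly.
Set Implicit Arguments.
Unset Strict Implicit.
Unset Printing Implicit Defensive.
Import Order.TTheory GRing.Theory Num.Theory.
Local Open Scope ring_scope.

Section MLDegree.
Variables (F : fieldType) (n : nat).

Definition sym_mx (M : 'M[F]_n) : Prop := M^T = M.

Definition mx_eval (p : {mpoly F[n * n]}) (M : 'M[F]_n) : F :=
  p.@[fun k => mxvec M 0 k].

Definition zariski_closure (X : 'M[F]_n -> Prop) : 'M[F]_n -> Prop :=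
  fun M => forall p : {mpoly F[n * n]},
    (forall N, X N -> mx_eval p N = 0) -> mx_eval p M = 0.

Definition regular (L : 'M[F]_n -> Prop) : Prop :=
  exists K, L K /\ K \in unitmx.

Definition orth_space (L : 'M[F]_n -> Prop) : 'M[F]_n -> Prop :=
  fun Sigma => sym_mx Sigma /\ forall K, L K -> \tr (K *m Sigma) = 0.

Definition reciprocal_variety (L : 'M[F]_n -> Prop) : 'M[F]_n -> Prop :=
  zariski_closure (fun M => exists K, [/\ L K, K \in unitmx & M = invmx K]).

Definition has_card (P : 'M[F]_n -> Prop) (d : nat) : Prop :=
  exists s : seq 'M[F]_n, [/\ uniq s, size s = d & forall M, P M <-> M \in s].

(* the ML degree of L is d: for generic S in S^n (i.e. for all S in a nonempty
   Zariski open subset of S^n, namely the non-vanishing locus of a polynomial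
   that does not vanish identically on S^n), the set
   L^{-1} \cap (L^perp + S) has exactly d elements *)
Definition ml_degree_is (L : 'M[F]_n -> Prop) (d : nat) : Prop :=
  exists p : {mpoly F[n * n]},
    (exists S0, sym_mx S0 /\ mx_eval p S0 != 0) /\
    forall S, sym_mx S -> mx_eval p S != 0 ->
      has_card (fun M => reciprocal_variety L M /\ orth_space L (M - S)) d.

Definition diag_trace_space (A : 'M[F]_n) : 'M[F]_n -> Prop :=
  fun K => [/\ sym_mx K, (forall i j, i != j -> K i j = 0) & \tr (A *m K) = 0].

End MLDegree.

(* Main.v *)
Require Import Defs.
From HB Require Import structures.
From mathcomp Require Import all_boot all_order all_algebra.
From mathcomp Require Import reals complex mpoly separable.
From mathcomp Require Import ring.
Import Order.TTheory GRing.Theory Num.Theory.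
Local Open Scope ring_scope.

Lemma map_resultant_gen (aR rR : comNzRingType) (f : {rmorphism aR -> rR}) (p q : {poly aR}) :
    f (lead_coef p) != 0 -> f (lead_coef q) != 0 ->
  f (resultant p q)= resultant (map_poly f p) (map_poly f q).
Proof.
move=> nz_fp nz_fq; rewrite /resultant /Sylvester_mx !size_map_poly_id0 //.
rewrite -det_map_mx /= map_col_mx; congr (\det (col_mx _ _));
  by apply: map_lin1_mx => v; rewrite map_poly_rV rmorphM /= map_rVpoly.
Qed.

Lemma coef_nz_size (R : nzSemiRingType) (p : {poly R}) i : p`_i != 0 -> (i < size p)%N.
Proof. by apply: contraR; rewrite -leqNgt => H; rewrite nth_default. Qed.

Lemma size_map_leq (aR rR : nzSemiRingType) (f : aR -> rR) (p : {poly aR}) :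
  (size (map_poly f p) <= size p)%N.
Proof. by rewrite map_polyE (leq_trans (size_Poly _)) // size_map. Qed.

Arguments map_resultant_gen {aR rR f p q}.

Lemma size_deriv_num (F : numFieldType) (p : {poly F}) : size p^`() = (size p).-1.
Proof.
have [->|pn0] := eqVneq p 0; first by rewrite deriv0 size_poly0.
have := lt_size_deriv pn0; case Hs: (size p) => [|k] //= lt.
apply/eqP; rewrite eqn_leq -ltnS lt /=.
case: k Hs {lt} => [//|k] Hs.
apply: coef_nz_size; rewrite coef_deriv mulrn_eq0 /=.
by have := pn0; rewrite -lead_coef_eq0 lead_coefE Hs.
Qed.

Lemma lead_map_nz (aR rR : nzRingType) (f : {rmorphism aR -> rR}) (p : {poly aR}) :
  (0 < size (map_poly f p))%N -> (size p <= size (map_poly f p))%N -> f (lead_coef p) != 0.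
Proof.
move=> h1 h2.
have e : size (map_poly f p) = size p.
  apply/eqP; rewrite eqn_leq h2 andbT.
  by rewrite size_map_leq.
have : lead_coef (map_poly f p) != 0 by rewrite lead_coef_eq0 -size_poly_eq0 -lt0n.
by rewrite lead_coefE e coef_map.
Qed.

Lemma deriv_prod_seq (R : comNzRingType) (I : eqType) (s : seq I) (F : I -> {poly R}) :
  uniq s ->
  (\prod_(i <- s) F i)^`() = \sum_(i <- s) (F i)^`() * \prod_(j <- s | j != i) F j.
Proof.
elim: s => [|x s IH] /=; first by rewrite !big_nil derivC.
case/andP=> xs us.
rewrite !big_cons derivM IH // eqxx /=.
congr (_ + _).
  rewrite [in RHS]big_seq_cond [in LHS]big_seq; congr (_ * _); apply: eq_bigl => j.
  case: (boolP (j \in s)) => // js /=.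
  by apply/esym; apply: contraNneq xs => <-.
rewrite mulr_sumr !big_seq; apply: eq_bigr => i iS.
rewrite big_cons.
have -> : (x != i) by apply: contraNneq xs => ->.
by rewrite mulrCA.
Qed.

Lemma rank_diag (F : fieldType) n (d : 'rV[F]_n) :
  \rank (diag_mx d) = (\sum_i ((d ord0 i != 0%R) : nat))%N.
Proof.
elim: n d => [|n IH] d; first by rewrite big_ord0 thinmx0 mxrank0.
have := diag_mx_row (lsubmx (d : 'rV_(1 + n))) (rsubmx (d : 'rV_(1 + n))).
rewrite hsubmxK => ->.
transitivity (\rank (diag_mx (lsubmx (d : 'rV_(1 + n)))) + \rank (diag_mx (rsubmx (d : 'rV_(1 + n)))))%N.
  exact: (@rank_diag_block_mx F 1 1 n n).
rewrite IH big_ord_recl.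
congr (_ + _)%N.
  rewrite rank_rV; congr nat_of_bool; apply/idP/idP; apply: contra => /eqP H.
    apply/eqP/matrixP => i j; rewrite !ord1 !mxE eqxx mulr1n.
    by rewrite (_ : lshift n ord0 = ord0) // ; apply: val_inj.
  move/matrixP: H => /(_ ord0 ord0); rewrite !mxE eqxx mulr1n => <-.
  by rewrite (_ : lshift n ord0 = ord0) //; apply: val_inj.
apply: eq_bigr => i _; rewrite !mxE.
by rewrite (_ : rshift 1 i = lift ord0 i) //; apply: val_inj.
Qed.

Lemma res_nz_noroot (F : closedFieldType) (p q : {poly F}) :
  p != 0 -> (forall t, root p t -> root q t -> False) -> resultant p q != 0.
Proof.
move=> pn0 H; rewrite resultant_eq0 -leqNgt.
have gn0 : gcdp p q != 0 by rewrite gcdp_eq0 negb_and pn0.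
case: (eqVneq (size (gcdp p q)) 1) => [->//|s1].
have /closed_rootP [t] := s1.
by rewrite root_gcd => /andP[/H h /h].
Qed.

Lemma noroot_res (F : idomainType) (p q : {poly F}) t :
  p != 0 -> resultant p q != 0 -> root p t -> root q t -> False.
Proof.
move=> pn0; rewrite resultant_eq0 -leqNgt => hs rp rq.
have gn0 : gcdp p q != 0 by rewrite gcdp_eq0 negb_and pn0.
have := @root_size_gt1 _ t _ gn0; rewrite root_gcd rp rq => /(_ isT).
by rewrite ltnNge hs.
Qed.

Lemma coprime_res (F : idomainType) (p q : {poly F}) :
  p != 0 -> resultant p q != 0 -> coprimep p q.
Proof.
move=> pn0; rewrite resultant_eq0 -leqNgt => hs.
have gn0 : gcdp p q != 0 by rewrite gcdp_eq0 negb_and pn0.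
by rewrite coprimep_def eqn_leq hs /= size_poly_gt0.
Qed.

Lemma size_deriv_leq (R : nzSemiRingType) (p : {poly R}) : (size p^`() <= (size p).-1)%N.
Proof.
have [->|pn0] := eqVneq p 0; first by rewrite deriv0 size_poly0.
by have := lt_size_deriv pn0; case: (size p).
Qed.

Lemma trace_delta (F : fieldType) n (B : 'M[F]_n) j : \tr (B *m delta_mx j j) = B j j.
Proof.
rewrite /mxtrace (bigD1 j) //= big1 ?addr0 => [|i ij].
  rewrite !mxE (bigD1 j) //= big1 ?addr0 => [|k kj]; first by rewrite !mxE !eqxx mulr1.
  by rewrite !mxE (negPf kj) mulr0.
rewrite !mxE big1 // => k _; rewrite !mxE.
by case: (eqVneq k j) => [->|kj]; rewrite ?(negPf ij) ?andbF ?mulr0.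
Qed.

Lemma inv_diag (F : fieldType) n (d : 'rV[F]_n) : (forall i, d 0 i != 0) ->
  invmx (diag_mx d) = diag_mx (\row_i (d 0 i)^-1).
Proof.
move=> dn0.
have uD : diag_mx d \in unitmx by rewrite unitmxE det_diag unitfE; apply/prodf_neq0 => i _.
rewrite -[RHS](mulKmx uD) mulmx_diag.
rewrite (_ : \row_j _ = const_mx 1) ?diag_const_mx ?mulmx1 //.
by apply/rowP => j; rewrite !mxE mulfV.
Qed.

Lemma enum_prod (T : finType) (x0 : T) (P : pred T) (K : fieldType) (rs0 : seq K)
  (G : K -> {poly K}) : size rs0 = #|P| ->
  exists z : T -> K, \prod_(i in P) G (z i) = \prod_(x <- rs0) G x.
Proof.
move=> hs; set e := enum P.
exists (fun i => nth 0 rs0 (index i e)).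
have me : map (fun i => nth 0 rs0 (index i e)) e = rs0.
  apply: (@eq_from_nth _ 0); first by rewrite size_map hs cardE.
  move=> k; rewrite size_map => ke.
  by rewrite (nth_map x0) // index_uniq // enum_uniq.
rewrite -[in RHS]me big_map.
by rewrite /e big_enum.
Qed.

Lemma Q0_facts (R : realType) (k : nat) (t : R[i]) :
  let Q0 := 'X^(k.+2) - 'X : {poly R[i]} in
  [/\ root Q0 t = (t ^+ k.+2 == t),
      Q0^`().[t] = t ^+ k.+1 *+ k.+2 - 1
    & (Q0^`())^`().[t] = t ^+ k *+ k.+1 *+ k.+2].
Proof.
move=> Q0.
have d1 : Q0^`() = 'X^(k.+1) *+ k.+2 - 1 by rewrite /Q0 derivB derivXn derivX.
have d2 : (Q0^`())^`() = 'X^k *+ k.+1 *+ k.+2 by rewrite d1 derivB derivMn derivXn derivC subr0.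
rewrite d2 d1 /Q0 /root.
rewrite hornerD hornerN hornerXn hornerX subr_eq0.
rewrite hornerD hornerN hornerMn hornerXn hornerC.
by rewrite !hornerMn hornerXn.
Qed.

Lemma Q0_sep1 (R : realType) (k : nat) (t : R[i]) :
  let Q0 := 'X^(k.+2) - 'X : {poly R[i]} in
  root Q0 t -> root Q0^`() t -> False.
Proof.
move=> Q0; have [r1 r2 _] := Q0_facts R k t.
rewrite r1 /root r2 subr_eq0 => /eqP e1 /eqP e2.
have : t *+ k.+2 = t.
  have := congr1 (fun x => t * x) e2; rewrite /= mulr1 mulrnAr -exprS e1 => ->.
  by [].
rewrite mulrSr => /(congr1 (fun x => x - t)); rewrite addrK subrr => /eqP.
rewrite mulrn_eq0 /= => /eqP t0.
by move: e2; rewrite t0 expr0n /= mul0rn => /eqP; rewrite eq_sym oner_eq0.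
Qed.

Lemma Q0_sep2 (R : realType) (k : nat) (t : R[i]) :
  let Q0 := 'X^(k.+2) - 'X : {poly R[i]} in
  root Q0^`() t -> root (Q0^`())^`() t -> False.
Proof.
move=> Q0; have [_ r2 r3] := Q0_facts R k t.
rewrite /root r2 r3 subr_eq0 => /eqP e2; rewrite !mulrn_eq0 /= expf_eq0 => /andP[k0 /eqP t0].
by move: e2; rewrite t0 expr0n /= mul0rn => /eqP; rewrite eq_sym oner_eq0.
Qed.

Section Main.
Variables (R : realType) (n : nat) (A : 'M[R[i]]_n).
Local Notation C := (R[i]).
Hypothesis Adiag : is_diag_mx A.

Definition rr := (\sum_i ((A i i != 0%R) : nat))%N.

Lemma Adef : A = diag_mx (\row_i A i i).
Proof.
apply/matrixP => i j; rewrite !mxE.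
case: (eqVneq i j) => [->|ij]; first by rewrite mulr1n.
by rewrite mulr0n; move/is_diag_mxP: Adiag => /(_ _ _ ij).
Qed.

Lemma rankA : \rank A = rr.
Proof. by rewrite {1}Adef rank_diag; apply: eq_bigr => i _; rewrite mxE. Qed.

Definition vx (i j : 'I_n) : {mpoly C[n * n]} := 'X_(mxvec_index i j).

Local Notation ev S := (meval (fun k => mxvec S 0 k)).

Lemma eval_vx (M : 'M[C]_n) i j : ev M (vx i j) = M i j.
Proof. by rewrite /vx mevalXU mxvecE. Qed.

Definition facH i : {poly {mpoly C[n * n]}} := ((A i i)%:MP)%:P * 'X + (vx i i)%:P.
Definition HH := \prod_i facH i.
Definition facS (S : 'M[C]_n) i : {poly C} := (A i i)%:P * 'X + (S i i)%:P.
Definition hS S := \prod_i facS S i.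

Lemma map_HH S : map_poly (ev S) HH = hS S.
Proof.
rewrite /HH rmorph_prod; apply: eq_bigr => i _.
by rewrite /facH /facS rmorphD rmorphM /= !map_polyC map_polyX /= mevalC eval_vx.
Qed.

Lemma lead_facH i : lead_coef (facH i) = if A i i == 0 then vx i i else (A i i)%:MP.
Proof.
rewrite /facH; case: eqP => [->|/eqP an0].
  by rewrite mpolyC0 polyC0 mul0r add0r lead_coefC.
rewrite lead_coefDl; last first.
  by rewrite size_polyC size_mulX ?polyC_eq0 ?mpolyC_eq0 // size_polyC mpolyC_eq0 an0; case: (_ != 0).
by rewrite lead_coefMX lead_coefC.
Qed.

Lemma ev_lead S : ev S (lead_coef HH) = \prod_i (if A i i == 0 then S i i else A i i).
Proof.
rewrite /HH lead_coef_prod rmorph_prod; apply: eq_bigr => i _.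
by rewrite lead_facH; case: eqP => _; [apply: eval_vx | apply: mevalC].
Qed.

Lemma size_facS (S : 'M[C]_n) i : (A i i = 0 -> S i i != 0) -> size (facS S i) = (A i i != 0).+1.
Proof.
move=> h; rewrite /facS size_MXaddC !polyC_eq0 size_polyC.
by case: (eqVneq (A i i) 0) => [e|//]; rewrite (negPf (h e)).
Qed.

Lemma size_hS (S : 'M[C]_n) : (forall i, A i i = 0 -> S i i != 0) -> size (hS S) = rr.+1.
Proof.
move=> h; rewrite /hS size_prod => [|i _]; last first.
  by rewrite -size_poly_eq0 (@size_facS S i (h i)).
rewrite (eq_bigr (fun i => ((A i i != 0%R) : nat) + 1)%N) => [|i _]; last by rewrite (@size_facS S i (h i)) addn1.
by rewrite big_split /= sum1_card card_ord -/rr -addSn addnK.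
Qed.


Lemma E1_of (S : 'M[C]_n) : ev S (lead_coef HH) != 0 -> forall i, A i i = 0 -> S i i != 0.
Proof.
rewrite ev_lead => /prodf_neq0 h i ai0.
by have := h i isT; rewrite ai0 eqxx.
Qed.

Lemma ev_res (S : 'M[C]_n) : (2 <= rr)%N -> ev S (lead_coef HH) != 0 ->
  ev S (resultant HH HH^`()) = resultant (hS S) (hS S)^`() /\
  ev S (resultant HH^`() (HH^`())^`()) = resultant (hS S)^`() ((hS S)^`())^`().
Proof.
move=> r2 hl.
have sH := @size_hS S (E1_of S hl).
have mH := map_HH S.
have m1 : map_poly (ev S) HH^`() = (hS S)^`() by rewrite -deriv_map mH.
have m2 : map_poly (ev S) (HH^`())^`() = ((hS S)^`())^`() by rewrite -!deriv_map mH.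
have sHH : size HH = rr.+1 by rewrite -(size_map_poly_id0 hl) mH.
have l1 : ev S (lead_coef HH^`()) != 0.
  apply: lead_map_nz; rewrite m1 size_deriv_num sH //=.
  - exact: ltnW r2.
  - by apply: leq_trans (size_deriv_leq _ _) _; rewrite sHH.
have l2 : ev S (lead_coef (HH^`())^`()) != 0.
  apply: lead_map_nz; rewrite m2 !size_deriv_num sH //=.
  - by case: rr r2 => [|[|k]].
  - apply: leq_trans (size_deriv_leq _ _) _; rewrite -!subn1 leq_sub2r //.
    by apply: leq_trans (size_deriv_leq _ _) _; rewrite sHH.
split.
  by rewrite (map_resultant_gen hl l1) mH m1.
by rewrite (map_resultant_gen l1 l2) m1 m2.
Qed.



Definition pp : {mpoly C[n * n]} :=
  lead_coef HH * resultant HH HH^`() * resultant HH^`() (HH^`())^`().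

Lemma generic (S : 'M[C]_n) : (2 <= rr)%N -> mx_eval pp S != 0 ->
  [/\ forall i, A i i = 0 -> S i i != 0,
      forall t, root (hS S) t -> root (hS S)^`() t -> False
    & coprimep (hS S)^`() ((hS S)^`())^`()].
Proof.
move=> r2; rewrite /mx_eval /pp !rmorphM /= !mulf_eq0 !negb_or => /andP[/andP[hl h1] h2].
have [e1 e2] := ev_res S r2 hl.
rewrite e1 in h1; rewrite e2 in h2.
have sH := @size_hS S (E1_of S hl).
have hn0 : hS S != 0 by rewrite -size_poly_eq0 sH.
have h'n0 : (hS S)^`() != 0 by rewrite -size_poly_eq0 size_deriv_num sH /=; case: rr r2.
split; first exact: E1_of.
  by move=> t; apply: noroot_res.
exact: coprime_res.
Qed.

Lemma card_supp : #|[pred i : 'I_n | A i i != 0]| = rr.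
Proof.
rewrite -sum1_card /rr big_mkcond /=; apply: eq_bigr => i _.
by rewrite !inE /=; case: (_ != _).
Qed.

Lemma supp_nonempty : (0 < rr)%N -> exists i0, A i0 i0 != 0.
Proof.
move=> r0; case: (pickP [pred i : 'I_n | A i i != 0]) => [i0 h|h]; first by exists i0.
by move: r0; rewrite /rr big1 // => i _; have := h i; rewrite /= => ->.
Qed.


Lemma S0_exists : (2 <= rr)%N -> exists S0 : 'M[C]_n, sym_mx S0 /\ mx_eval pp S0 != 0.
Proof.
move=> r2.
have [k rk] : exists k, rr = k.+2 by exists rr.-2; case: rr r2 => [|[|k]].
pose Q0 : {poly C} := 'X^(k.+2) - 'X.
have sQ0 : size Q0 = k.+3.
  by rewrite /Q0 size_addl ?size_polyXn // size_opp size_polyX.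
have Q0lead : lead_coef Q0 = 1.
  by rewrite /Q0 lead_coefDl ?lead_coefXn // size_polyXn size_opp size_polyX.
have [rs0 hQ] := closed_field_poly_normal Q0.
rewrite Q0lead scale1r in hQ.
have srs : size rs0 = #|[pred i : 'I_n | A i i != 0]|.
  move: (congr1 (fun p : {poly C} => size p) hQ) => /=; rewrite size_prod_XsubC sQ0 card_supp rk.
  by case.
have [i0 ai0] := supp_nonempty (ltnW r2).
have [z hz] := @enum_prod _ i0 _ _ _ (fun x => 'X - x%:P) srs.
pose S0 : 'M[C]_n := diag_mx (\row_i (if A i i != 0 then - (A i i * z i) else 1)).
exists S0; split; first by rewrite /sym_mx tr_diag_mx.
have S0ii i : S0 i i = if A i i != 0 then - (A i i * z i) else 1 by rewrite !mxE eqxx mulr1n.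
have hl : ev S0 (lead_coef HH) != 0.
  rewrite ev_lead; apply/prodf_neq0 => i _; rewrite S0ii.
  by case: (eqVneq (A i i) 0) => [->|an]; rewrite ?eqxx ?(negPf an) /= ?oner_eq0.
pose K := \prod_(i in [pred i : 'I_n | A i i != 0]) A i i.
have Kn0 : K != 0 by apply/prodf_neq0 => i; rewrite ?inE.
have hSe : hS S0 = K *: Q0.
  rewrite hQ -hz -scaler_prod /hS (bigID [pred i : 'I_n | A i i != 0]) /=.
  rewrite [X in _ * X]big1 ?mulr1; last first.
    move=> i; rewrite ?inE => /negPn/eqP ai.
    by rewrite /facS S0ii ai eqxx /= polyC0 mul0r add0r.
  apply: eq_bigr => i; rewrite ?inE => ai.
  by rewrite /facS S0ii ai mul_polyC polyCN polyCM mul_polyC scalerBr.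
have Q0'n0 : Q0^`() != 0.
  apply/negP => /eqP h; have [_ e _] := Q0_facts R k 0; move: e.
  by rewrite h horner0 expr0n /= mul0rn sub0r => /eqP; rewrite eq_sym oppr_eq0 oner_eq0.
have [e1 e2] := ev_res S0 r2 hl.
rewrite /mx_eval /pp !rmorphM /= e1 e2 !mulf_neq0 //.
  apply: res_nz_noroot; first by rewrite hSe scale_poly_eq0 negb_or Kn0 -size_poly_eq0 sQ0.
  by move=> t; rewrite hSe derivZ !rootZ //; apply: Q0_sep1.
apply: res_nz_noroot; first by rewrite hSe derivZ scale_poly_eq0 negb_or Kn0.
by move=> t; rewrite hSe !derivZ !rootZ //; apply: Q0_sep2.
Qed.

Lemma L_diag K : diag_trace_space A K -> K = diag_mx (\row_i K i i).
Proof.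
case=> _ hoff _; apply/matrixP => i j; rewrite !mxE.
by case: (eqVneq i j) => [->|ij]; rewrite ?mulr1n // mulr0n hoff.
Qed.

Lemma tr_Adiag (k : 'rV[C]_n) : \tr (A *m diag_mx k) = \sum_i A i i * k 0 i.
Proof.
by rewrite {1}Adef mulmx_diag mxtrace_diag; apply: eq_bigr => i _; rewrite !mxE.
Qed.

Lemma tr_diagX (k : 'rV[C]_n) (X : 'M[C]_n) : \tr (diag_mx k *m X) = \sum_i k 0 i * X i i.
Proof. by rewrite mul_diag_mx /mxtrace; apply: eq_bigr => i _; rewrite mxE. Qed.

Definition fpoly : {mpoly C[n * n]} := \sum_i (A i i)%:MP * \prod_(j | j != i) vx j j.

Lemma eval_fpoly (M : 'M[C]_n) : mx_eval fpoly M = \sum_i A i i * \prod_(j | j != i) M j j.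
Proof.
rewrite /mx_eval /fpoly rmorph_sum; apply: eq_bigr => i _.
rewrite rmorphM rmorph_prod /= mevalC; congr (_ * _); apply: eq_bigr => j _.
exact: eval_vx.
Qed.

Lemma sum_prod_inv (m : 'I_n -> C) : (forall j, m j != 0) ->
  \sum_i A i i * \prod_(j | j != i) m j = (\prod_j m j) * \sum_i A i i * (m i)^-1.
Proof.
move=> mn0; rewrite mulr_sumr; apply: eq_bigr => i _.
rewrite [in RHS](bigD1 i) //=.
by field; apply: mn0.
Qed.

Definition Mt (S : 'M[C]_n) (t : C) := diag_mx (\row_i (A i i * t + S i i)).

Lemma deriv_hS_eval (S : 'M[C]_n) t :
  (hS S)^`().[t] = \sum_i A i i * \prod_(j | j != i) (A j j * t + S j j).
Proof.
rewrite /hS deriv_prod_seq ?index_enum_uniq // horner_sum; apply: eq_bigr => i _.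
rewrite hornerM horner_prod /facS derivMXaddC derivC mul0r addr0 hornerC.
by congr (_ * _); apply: eq_bigr => j _; rewrite hornerMXaddC hornerC.
Qed.

Lemma fpoly_Mt S t : mx_eval fpoly (Mt S t) = (hS S)^`().[t].
Proof.
rewrite eval_fpoly deriv_hS_eval; apply: eq_bigr => i _; congr (_ * _).
by apply: eq_bigr => j _; rewrite !mxE eqxx mulr1n.
Qed.

Lemma unit_diag (k : 'rV[C]_n) : diag_mx k \in unitmx -> forall i, k 0 i != 0.
Proof. by rewrite unitmxE det_diag unitfE => /prodf_neq0 h i; apply: h. Qed.

Lemma inv_points_vanish K : diag_trace_space A K -> K \in unitmx ->
  mx_eval fpoly (invmx K) = 0 /\ forall i j, i != j -> invmx K i j = 0.
Proof.
move=> LK uK; have Kd := @L_diag K LK.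
rewrite Kd in uK; have kn0 := @unit_diag _ uK.
have ki : invmx K = diag_mx (\row_i (K i i)^-1).
  by rewrite {1}Kd inv_diag //; apply/matrixP => i j; rewrite !mxE.
split; last by move=> i j ij; rewrite ki !mxE (negPf ij) mulr0n.
rewrite ki eval_fpoly.
rewrite (eq_bigr (fun i => A i i * \prod_(j | j != i) (K j j)^-1)); last first.
  by move=> i _; congr (_ * _); apply: eq_bigr => j _; rewrite !mxE eqxx mulr1n.
rewrite sum_prod_inv => [|j]; last by rewrite invr_eq0; have := kn0 j; rewrite mxE.
case: LK => _ _ h; rewrite Kd tr_Adiag in h.
have h' : \sum_i A i i * K i i = 0.
  by rewrite -[RHS]h; apply: eq_bigr => i _; rewrite mxE.
rewrite [X in _ * X](eq_bigr (fun i => A i i * K i i)); first by rewrite h' mulr0.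
by move=> i _; rewrite invrK.
Qed.

Lemma rr_ge2 : A != 0 -> regular (diag_trace_space A) -> (2 <= rr)%N.
Proof.
move=> An0 [K [LK uK]].
have Kd := @L_diag K LK.
have uK' : diag_mx (\row_i K i i) \in unitmx by rewrite -Kd.
have kn0 i : K i i != 0 by have := @unit_diag _ uK' i; rewrite mxE.
have htr : \sum_i A i i * K i i = 0.
  case: LK => _ _ h; rewrite Kd tr_Adiag in h.
  by rewrite -[RHS]h; apply: eq_bigr => i _; rewrite mxE.
have [i0 ai0] : exists i0, A i0 i0 != 0.
  case: (pickP [pred i | A i i != 0]) => [i0 h|h]; first by exists i0.
  exfalso; move/negP: An0; apply; rewrite Adef; apply/eqP/matrixP => i j.
  by rewrite !mxE; have := h i; rewrite /= => /negbFE/eqP ->; rewrite mul0rn.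
case: (pickP [pred j | (j != i0) && (A j j != 0)]) => [j /andP[ji0 aj] | h].
  rewrite /rr (bigD1 i0) //= (bigD1 j) ?ji0 //= ai0 aj.
  by rewrite addnA leq_addr.
exfalso; move: htr; rewrite (bigD1 i0) //= big1 ?addr0 => [|j ji0].
  by apply/eqP; rewrite mulf_neq0.
by have := h j; rewrite /= ji0 /= => /negbFE/eqP ->; rewrite mul0r.
Qed.

Lemma main_sec : A != 0 -> regular (diag_trace_space A) ->
  ml_degree_is (diag_trace_space A) (\rank A).-1.
Proof.
move=> An0 reg; have r2 := rr_ge2 An0 reg.
exists pp; split; first exact: S0_exists.
move=> S Ssym pS.
have [E1 E2 E3] := generic S r2 pS.
pose g := (hS S)^`().
have sH := @size_hS S E1.
have sg : size g = rr by rewrite size_deriv_num sH.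
have gn0 : g != 0 by rewrite -size_poly_eq0 sg; case: rr r2.
have [rs hg] := closed_field_poly_normal g.
have lcn0 : lead_coef g != 0 by rewrite lead_coef_eq0.
pose P := \prod_(z <- rs) ('X - z%:P).
have gP : g %= P by rewrite {1}hg eqp_scale.
have urs : uniq rs.
  rewrite -separable_prod_XsubC -/P -(eqp_separable gP) unlock /g; exact: E3.
have groot t : root g t = (t \in rs) by rewrite {1}hg rootZ // root_prod_XsubC.
have srs : size rs = rr.-1.
  by have := sg; rewrite {1}hg size_scale // size_prod_XsubC => <-.
have [i0 ai0] := supp_nonempty (ltnW r2).
have Mt_inj : injective (Mt S).
  move=> t1 t2 /matrixP /(_ i0 i0); rewrite !mxE eqxx !mulr1n.
  by move/addIr/(mulfI ai0).
have evx N i j : mx_eval (vx i j) N = N i j := eval_vx N i j.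
exists [seq Mt S t | t <- rs]; split.
- by rewrite map_inj_uniq.
- by rewrite size_map srs rankA.
move=> M; split.
  case=> [rec [_ orth]].
  have Moff i j : i != j -> M i j = 0.
    move=> ij; have := rec (vx i j); rewrite !evx; apply => N [K [LK uK ->]].
    by rewrite evx; exact: (@inv_points_vanish K LK uK).2 i j ij.
  have fM : mx_eval fpoly M = 0.
    by apply: rec => N [K [LK uK ->]]; exact: (@inv_points_vanish K LK uK).1.
  pose t := (M i0 i0 - S i0 i0) / A i0 i0.
  have Mjj j : M j j = A j j * t + S j j.
    pose Kj := A i0 i0 *: delta_mx j j - A j j *: delta_mx i0 i0 : 'M[C]_n.
    have LKj : diag_trace_space A Kj.
      split.
      - by rewrite /sym_mx /Kj linearB !linearZ /= !trmx_delta.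
      - move=> a b ab.
        have f c : ((a == c) && (b == c)) = false.
          by apply/negP => /andP[/eqP ea /eqP eb]; rewrite ea eb eqxx in ab.
        by rewrite !mxE !f /= !(mulr0n, mulr0, subr0).
      - rewrite /Kj mulmxBr -!scalemxAr linearB !linearZ /= !trace_delta.
        by rewrite -[A j j *: _]/(A j j * _); ring.
    have := orth Kj LKj.
    rewrite /Kj mulmxBl -!scalemxAl linearB !linearZ /=.
rewrite [\tr (delta_mx j j *m _)]mxtrace_mulC [\tr (delta_mx i0 i0 *m _)]mxtrace_mulC.
rewrite !trace_delta !mxE.
    rewrite -[A j j *: _]/(A j j * _) mulrN.
    move/eqP; rewrite subr_eq0 => /eqP h.
    have : M j j - S j j = A j j * t.
      by apply: (mulfI ai0); rewrite h /t; field.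
    by move/eqP; rewrite subr_eq => /eqP.
  have MMt : M = Mt S t.
    apply/matrixP => a b; rewrite !mxE; case: (eqVneq a b) => [<-|ab].
      by rewrite mulr1n Mjj.
    by rewrite mulr0n Moff.
  apply/mapP; exists t => //; rewrite -groot /root -fpoly_Mt -MMt fM eqxx.
  by [].
case/mapP => t trs ->.
have gt : g.[t] = 0 by apply/eqP; rewrite -/(root g t) groot.
have ht : ~~ root (hS S) t.
  by apply/negP => rt; apply: (E2 t rt); rewrite -/g groot.
have mn0 j : A j j * t + S j j != 0.
  move: ht; rewrite /root /hS horner_prod => /prodf_neq0 /(_ j isT).
  by rewrite /facS hornerMXaddC hornerC.
pose K := diag_mx (\row_j (A j j * t + S j j)^-1).
have sum0 : \sum_i A i i * (A i i * t + S i i)^-1 = 0.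
  have e : \sum_i A i i * \prod_(j | j != i) (A j j * t + S j j) = 0.
    by rewrite -deriv_hS_eval.
  have Pn0 : \prod_j (A j j * t + S j j) != 0 by apply/prodf_neq0 => j _.
  by move: e; rewrite sum_prod_inv // => /eqP; rewrite mulf_eq0 (negPf Pn0) /= => /eqP.
have LK : diag_trace_space A K.
  split.
  - by rewrite /sym_mx tr_diag_mx.
  - by move=> a b ab; rewrite !mxE (negPf ab) mulr0n.
  - by rewrite tr_Adiag -[RHS]sum0; apply: eq_bigr => i _; rewrite mxE.
have uK : K \in unitmx.
  by rewrite unitmxE det_diag unitfE; apply/prodf_neq0 => j _; rewrite mxE invr_eq0.
have MK : Mt S t = invmx K.
  rewrite inv_diag => [|j]; last by rewrite mxE invr_eq0.
  by apply/matrixP => a b; rewrite !mxE invrK.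
split.
  by move=> p hp; apply: hp; exists K.
split.
  by rewrite /sym_mx linearB /= tr_diag_mx Ssym.
move=> K' LK'.
have e1 : \tr (K' *m (Mt S t - S)) = t * \tr (A *m K').
  have Kd' := @L_diag K' LK'.
  rewrite [in LHS]Kd' [in RHS]Kd' tr_diagX tr_Adiag mulr_sumr.
  apply: eq_bigr => i _; rewrite !mxE eqxx mulr1n addrK.
  by ring.
by rewrite e1; case: LK' => _ _ ->; rewrite mulr0.
Qed.
End Main.

Theorem proposition3p7 (R : realType) (n : nat) (A : 'M[R[i]]_n) :
  is_diag_mx A -> A != 0 ->
  regular (diag_trace_space A) ->
  ml_degree_is (diag_trace_space A) (\rank A).-1.
Proof.
move=> Adiag An0 reg.
exact: (@main_sec R n A Adiag An0 reg).
Qed.
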